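(* In the continuous-time single-buyer game with known total value $V=1$, every truthful direct-revelation mechanism satisfies $\inf_v X_v\le 1/e$, where the infimum is over all buyer types $v$ and $X_v=\int_0^1x_v(t)\,dt$ is the revenue obtained from type $v$.
   Context: Continuous-time single-buyer game: a buyer type is a Lipschitz-continuous $v:[0,1]\to[0,\infty)$ with $\int_0^1 v(t)\,dt=V$ ($V$ known to the seller). A direct-revelation mechanism assigns to each type $v$ a continuous rate function $r_v:[0,1]\to[0,1]$ and a continuous payment function $x_v:[0,1]\to[0,\infty)$. It is truthful if (i) $r_v(t)v(t)-x_v(t)\ge0$ for all types $v$ and all $t\in[0,1]$, and (ii) for all types $v,v'$ and $\tau\in[0,1]$ such that $r_{v'}(t)v(t)-x_{v'}(t)\ge0$ for all $0\le t\le\tau$, we have $\int_0^1(r_v(t)v(t)-x_v(t))\,dt\ge\int_0^\tau(r_{v'}(t)v(t)-x_{v'}(t))\,dt$. *)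

(* Defs.v *)
From Stdlib Require Import Reals.
From Coquelicot Require Import Coquelicot.
Open Scope R_scope.

Definition continuous_on_Icc (a b : R) (f : R -> R) : Prop :=
  forall t, a <= t <= b ->
    forall eps, 0 < eps -> exists delta, 0 < delta /\
      forall s, a <= s <= b -> Rabs (s - t) < delta -> Rabs (f s - f t) < eps.

Definition lipschitz_on_Icc (a b : R) (f : R -> R) : Prop :=
  exists L, 0 <= L /\ forall s t, a <= s <= b -> a <= t <= b ->
    Rabs (f s - f t) <= L * Rabs (s - t).

(* A buyer type with known total value V: a Lipschitz v : [0,1] -> [0,oo)
   with integral V over [0,1].  (Values outside [0,1] are irrelevant.) *)
Definition buyer_type (V : R) (v : R -> R) : Prop :=
  lipschitz_on_Icc 0 1 v /\
  (forall t, 0 <= t <= 1 -> 0 <= v t) /\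
  RInt v 0 1 = V.

(* A direct-revelation mechanism: rate r v and payment x v for each type v. *)
Definition mechanism := (R -> R) -> (R -> R).

Definition well_formed (V : R) (r x : mechanism) : Prop :=
  forall v, buyer_type V v ->
    continuous_on_Icc 0 1 (r v) /\ continuous_on_Icc 0 1 (x v) /\
    (forall t, 0 <= t <= 1 -> 0 <= r v t <= 1) /\
    (forall t, 0 <= t <= 1 -> 0 <= x v t).

Definition util (r x : mechanism) (v v' : R -> R) (t : R) : R :=
  r v' t * v t - x v' t.

Definition truthful (V : R) (r x : mechanism) : Prop :=
  (forall v, buyer_type V v -> forall t, 0 <= t <= 1 -> 0 <= util r x v v t) /\
  (* (ii) no profitable misreport followed by leaving at time tau *)
  (forall v v' tau, buyer_type V v -> buyer_type V v' -> 0 <= tau <= 1 ->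
     (forall t, 0 <= t <= tau -> 0 <= util r x v v' t) ->
     RInt (util r x v v') 0 tau <= RInt (util r x v v) 0 1).

Definition revenue (x : mechanism) (v : R -> R) : R := RInt (x v) 0 1.

Definition inf_revenue (V : R) (x : mechanism) : Rbar :=
  Glb_Rbar (fun y => exists v, buyer_type V v /\ y = revenue x v).

(* Main.v *)
Require Import Defs.
From Stdlib Require Import Reals.
From Coquelicot Require Import Coquelicot.
Open Scope R_scope.
From Stdlib Require Import Lra Lia Classical.

Definition clamp01 (s:R) : R := Rmax 0 (Rmin 1 s).

Lemma clamp01_lip a b : Rabs (clamp01 a - clamp01 b) <= Rabs (a - b).
Proof. unfold clamp01, Rmax, Rmin; repeat destruct Rle_dec; unfold Rabs; repeat destruct Rcase_abs; lra. Qed.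

Lemma clamp01_in a : 0 <= clamp01 a <= 1.
Proof. unfold clamp01, Rmax, Rmin; repeat destruct Rle_dec; lra. Qed.

Lemma clamp01_id a : 0 <= a <= 1 -> clamp01 a = a.
Proof. intros; unfold clamp01, Rmax, Rmin; repeat destruct Rle_dec; lra. Qed.

Lemma clamp01_le1 a : 1 <= a -> clamp01 a = 1.
Proof. intros; unfold clamp01, Rmax, Rmin; repeat destruct Rle_dec; lra. Qed.

Lemma clamp01_le0 a : a <= 0 -> clamp01 a = 0.
Proof. intros; unfold clamp01, Rmax, Rmin; repeat destruct Rle_dec; lra. Qed.

Lemma clamp01_mono a b : a <= b -> clamp01 a <= clamp01 b.
Proof. intros; unfold clamp01, Rmax, Rmin; repeat destruct Rle_dec; lra. Qed.

Definition CC (f:R->R) := forall y, continuous (fun s => f (clamp01 s)) y.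

Lemma CC_of_Icc f : continuous_on_Icc 0 1 f -> CC f.
Proof.
  intros H y. apply continuity_pt_filterlim.
  unfold continuity_pt, continue_in, limit1_in, limit_in.
  intros eps Heps.
  destruct (H (clamp01 y) (clamp01_in y) eps Heps) as [d [Hd Hs]].
  exists d. split; auto. intros s [_ Hsd]. simpl in *. unfold R_dist in *.
  apply Hs; [apply clamp01_in|].
  eapply Rle_lt_trans; [apply clamp01_lip | exact Hsd].
Qed.

Lemma lip_Icc_cont f : lipschitz_on_Icc 0 1 f -> continuous_on_Icc 0 1 f.
Proof.
  intros [L [HL H]] t Ht eps Heps.
  exists (eps / (L+1)). split. apply Rdiv_lt_0_compat; lra.
  intros s Hs Hst. eapply Rle_lt_trans. apply H; auto.
  apply Rle_lt_trans with ((L+1) * Rabs (s - t)).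
  apply Rmult_le_compat_r. apply Rabs_pos. lra.
  apply Rmult_lt_reg_l with (/(L+1)). apply Rinv_0_lt_compat; lra.
  rewrite <- Rmult_assoc, Rinv_l by lra. rewrite Rmult_1_l.
  unfold Rdiv in Hst. rewrite Rmult_comm. exact Hst.
Qed.

Lemma CC_ex_RInt f a b : CC f -> 0 <= a -> a <= b -> b <= 1 -> ex_RInt f a b.
Proof.
  intros H Ha Hab Hb.
  apply ex_RInt_ext with (fun s => f (clamp01 s)).
  intros s Hs. rewrite Rmin_left in Hs by lra. rewrite Rmax_right in Hs by lra.
  rewrite clamp01_id; auto; lra.
  apply (@ex_RInt_continuous R_CompleteNormedModule). intros; apply H.
Qed.

Lemma CC_plus f g : CC f -> CC g -> CC (fun s => f s + g s).
Proof. intros Hf Hg y. apply (continuous_plus (fun s => f (clamp01 s)) (fun s => g (clamp01 s))); auto. Qed.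
Lemma CC_minus f g : CC f -> CC g -> CC (fun s => f s - g s).
Proof. intros Hf Hg y. apply (continuous_minus (fun s => f (clamp01 s)) (fun s => g (clamp01 s))); auto. Qed.
Lemma CC_mult f g : CC f -> CC g -> CC (fun s => f s * g s).
Proof. intros Hf Hg y. apply (continuous_mult (fun s => f (clamp01 s)) (fun s => g (clamp01 s))); auto. Qed.
Lemma CC_const c : CC (fun _ => c).
Proof. intros y. apply continuous_const. Qed.

Lemma RInt_plus' f g a b : ex_RInt f a b -> ex_RInt g a b ->
  RInt (fun x => f x + g x) a b = RInt f a b + RInt g a b.
Proof. intros; apply (RInt_plus f g a b); auto. Qed.
Lemma RInt_minus' f g a b : ex_RInt f a b -> ex_RInt g a b ->
  RInt (fun x => f x - g x) a b = RInt f a b - RInt g a b.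
Proof. intros; apply (RInt_minus f g a b); auto. Qed.
Lemma RInt_scal' f a b c : ex_RInt f a b ->
  RInt (fun x => c * f x) a b = c * RInt f a b.
Proof. intros; apply (RInt_scal f a b c); auto. Qed.
Lemma RInt_const' a b c : RInt (fun _ => c) a b = (b - a) * c.
Proof. rewrite RInt_const. reflexivity. Qed.
Lemma RInt_Chasles' f a b c : ex_RInt f a b -> ex_RInt f b c ->
  RInt f a b + RInt f b c = RInt f a c.
Proof. intros; apply (RInt_Chasles f a b c); auto. Qed.

Lemma RInt_zero_on f a b : a <= b -> (forall s, a < s < b -> f s = 0) -> RInt f a b = 0.
Proof.
  intros Hab H. rewrite (RInt_ext f (fun _ => 0)).
  rewrite RInt_const'. lra.
  intros s Hs. rewrite Rmin_left in Hs by lra. rewrite Rmax_right in Hs by lra. auto.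
Qed.

Lemma RInt_ext' (f g : R -> R) a b : (forall x, Rmin a b < x < Rmax a b -> f x = g x) -> RInt f a b = RInt g a b.
Proof. intros H. apply RInt_ext. exact H. Qed.


Lemma ln_le_xm1 x : 0 < x -> ln x <= x - 1.
Proof. intros Hx. pose proof (exp_ineq1_le (ln x)). rewrite exp_ln in H by lra. lra. Qed.

Lemma xlnx_bound a : 0 < a -> - a * ln a <= exp (-1).
Proof.
  intros Ha. pose proof (exp_ineq1_le (- ln a - 1)).
  replace (- ln a - 1) with (ln (/a) + (-1)) in H by (rewrite ln_Rinv by lra; ring).
  rewrite exp_plus, exp_ln in H by (apply Rinv_0_lt_compat; lra).
  rewrite ln_Rinv in H by lra.
  apply Rmult_le_compat_l with (r := a) in H; [|lra].
  rewrite Rmult_plus_distr_l, <- Rmult_assoc, Rinv_r in H by lra. nra.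
Qed.

Lemma ln_ratio c y : 0 <= c -> c <= y -> y < 1 -> (y - c) / (1 - c) <= ln (1 - c) - ln (1 - y).
Proof.
  intros Hc Hcy Hy.
  pose proof (ln_le_xm1 ((1-y)/(1-c))) as H.
  assert (0 < (1 - y) / (1 - c)) by (apply Rdiv_lt_0_compat; lra).
  specialize (H H0). unfold Rdiv in H. rewrite ln_mult, ln_Rinv in H by (try apply Rinv_0_lt_compat; lra).
  replace ((y - c) / (1 - c)) with (1 - (1 - y) * / (1 - c)) by (field; lra). lra.
Qed.

Definition fa (a y : R) : R := if Rlt_dec y (1 - a) then a / (1 - y) else 1.
Definition Fa (a y : R) : R := if Rle_dec y (1 - a) then - a * ln (1 - y) else - a * ln a + (y - (1 - a)).

Lemma fa_mono (a : R) (Ha : 0 < a) (Ha1 : a <= 1) c b : c <= b -> fa a c <= fa a b.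
Proof.
  intros H. unfold fa. destruct (Rlt_dec c (1-a)); destruct (Rlt_dec b (1-a)); try lra.
  apply Rmult_le_compat_l; [lra|]. apply Rinv_le_contravar; lra.
  apply Rmult_le_reg_r with (1 - c); [lra|]. unfold Rdiv. rewrite Rmult_assoc, Rinv_l by lra. lra.
Qed.

Lemma fa_ge0 (a : R) (Ha : 0 < a) (Ha1 : a <= 1) c : 0 <= fa a c.
Proof. unfold fa. destruct Rlt_dec; [|lra]. apply Rlt_le, Rdiv_lt_0_compat; lra. Qed.

Lemma fa_le1 (a : R) (Ha : 0 < a) (Ha1 : a <= 1) c : fa a c <= 1.
Proof. unfold fa. destruct Rlt_dec; [|lra].
  apply Rmult_le_reg_r with (1 - c); [lra|]. unfold Rdiv. rewrite Rmult_assoc, Rinv_l by lra. lra. Qed.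

Lemma Fa_conv (a : R) (Ha : 0 < a) (Ha1 : a <= 1) c b : 0 <= c -> c <= b -> fa a c * (b - c) <= Fa a b - Fa a c.
Proof.
  intros Hc Hcb. unfold fa, Fa.
  destruct (Rlt_dec c (1-a)) as [H1|H1]; destruct (Rle_dec b (1-a)) as [H2|H2];
  destruct (Rle_dec c (1-a)) as [H3|H3]; try lra.
  - pose proof (ln_ratio c b Hc Hcb ltac:(lra)).
    replace (a / (1 - c) * (b - c)) with (a * ((b - c) / (1 - c))) by (field; lra).
    nra.
  - pose proof (ln_ratio c (1-a) Hc ltac:(lra) ltac:(lra)).
    replace (1 - (1 - a)) with a in H by ring.
    assert (a / (1 - c) <= 1).
    { apply Rmult_le_reg_r with (1 - c); [lra|]. unfold Rdiv. rewrite Rmult_assoc, Rinv_l by lra. lra. }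
    replace (a / (1 - c) * (b - c)) with (a / (1 - c) * (b - (1 - a)) + a * ((1 - a - c) / (1 - c))) by (field; lra).
    assert (a / (1 - c) * (b - (1 - a)) <= b - (1 - a)) by nra.
    nra.
  - assert (c = 1 - a) by lra. subst c. assert (b = 1 - a) by lra. subst b. lra.
  - assert (c = 1 - a) by lra. subst c. replace (1 - (1 - a)) with a by ring. lra.
Qed.

Lemma Fa_mono (a : R) (Ha : 0 < a) (Ha1 : a <= 1) c b : 0 <= c -> c <= b -> Fa a c <= Fa a b.
Proof. intros. pose proof (Fa_conv a Ha Ha1 c b H H0). pose proof (fa_ge0 a Ha Ha1 c). nra. Qed.

Lemma Fa0 (a : R) (Ha : 0 < a) (Ha1 : a <= 1) : Fa a 0 = 0.
Proof. unfold Fa. destruct Rle_dec; [|lra]. rewrite Rminus_0_r, ln_1. ring. Qed.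

Lemma Fa_big (a : R) (Ha : 0 < a) (Ha1 : a <= 1) y : 1 <= y -> Fa a y = - a * ln a + (y - (1 - a)).
Proof. intros. unfold Fa. destruct Rle_dec; lra. Qed.


Lemma key_real (n:nat) (M Q : nat -> R) (a D : R) :
  0 < a -> 0 <= D ->
  M 0%nat = 0 -> Q 0%nat = 0 -> M (S n) = 1 ->
  (forall i, (1 <= i <= S n)%nat -> 0 <= Q i - Q (pred i) <= M i - M (pred i) /\ M i - M (pred i) <= D) ->
  (forall i, (1 <= i <= n)%nat -> (1 - M (S i)) * (Q i - Q (pred i)) <= a * (M i - M (pred i))) ->
  Q (S n) - a <= exp (-1) + 2 * D.
Proof.
  intros Ha HD HM0 HQ0 HMn Hinc Hcon.
  assert (Hmono : forall k, (k <= S n)%nat -> 0 <= M k /\ Q k <= M k).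
  { induction k; intros Hk. rewrite HM0, HQ0; lra.
    destruct (Hinc (S k) ltac:(lia)) as [[H1 H2] H3]. simpl pred in *.
    destruct (IHk ltac:(lia)). lra. }
  destruct (Rle_dec a 1) as [Ha1|Ha1].
  2:{ destruct (Hmono (S n) (le_n _)). pose proof (exp_pos (-1)). lra. }
  assert (Hstep : forall i, (1 <= i <= S n)%nat ->
     Q i - Q (pred i) <= Fa a (M i + 2*D) - Fa a (M (pred i) + 2*D)).
  { intros i Hi.
    destruct (Hinc i Hi) as [[Hq1 Hq2] Hm].
    assert (Hf : Q i - Q (pred i) <= (M i - M (pred i)) * fa a (M (pred i) + 2 * D)).
    { destruct (Nat.eq_dec i (S n)) as [E|E].
      - subst i. simpl pred in *. unfold fa. destruct Rlt_dec; [|lra].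
        exfalso. destruct (Hmono n ltac:(lia)). lra.
      - assert (Hi' : (1 <= i <= n)%nat) by lia.
        specialize (Hcon i Hi').
        destruct (Hinc (S i) ltac:(lia)) as [_ Hm2]. simpl pred in Hm2.
        assert (fa a (M (S i)) <= fa a (M (pred i) + 2 * D)).
        { apply fa_mono; lra. }
        assert (Q i - Q (pred i) <= (M i - M (pred i)) * fa a (M (S i))).
        { unfold fa. destruct Rlt_dec.
          - apply Rmult_le_reg_r with (1 - M (S i)); [lra|].
            unfold Rdiv. replace ((M i - M (pred i)) * (a * / (1 - M (S i))) * (1 - M (S i)))
              with (a * (M i - M (pred i))) by (field; lra). lra.
          - lra. }
        assert (0 <= M i - M (pred i)) by lra. nra. }
    destruct (Hmono (pred i) ltac:(lia)).
    assert (fa a (M (pred i) + 2 * D) * (M i + 2 * D - (M (pred i) + 2 * D)) <=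
      Fa a (M i + 2 * D) - Fa a (M (pred i) + 2 * D)) by (apply Fa_conv; lra).
    lra. }
  assert (Htel : forall k, (k <= S n)%nat -> Q k <= Fa a (M k + 2*D) - Fa a (2*D)).
  { induction k; intros Hk. rewrite HQ0, HM0, Rplus_0_l. lra.
    specialize (Hstep (S k) ltac:(lia)). simpl pred in Hstep. specialize (IHk ltac:(lia)). lra. }
  specialize (Htel (S n) (le_n _)). rewrite HMn in Htel.
  rewrite Fa_big in Htel by lra.
  assert (H : Fa a 0 <= Fa a (2*D)) by (apply Fa_mono; lra). rewrite Fa0 in H by lra.
  pose proof (xlnx_bound a Ha). lra.
Qed.


Definition Pn (n i : nat) (s : R) : R := clamp01 (INR i - INR n * s).

Lemma Pn_in n i s : 0 <= Pn n i s <= 1.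
Proof. apply clamp01_in. Qed.

Lemma Pn_mono n j s : Pn n j s <= Pn n (S j) s.
Proof. unfold Pn. apply clamp01_mono. rewrite S_INR. lra. Qed.

Lemma Pn_zero n i s : INR i <= INR n * s -> Pn n i s = 0.
Proof. intros. unfold Pn. apply clamp01_le0. lra. Qed.

Lemma Pn_one n i s : INR n * s <= INR i - 1 -> Pn n i s = 1.
Proof. intros. unfold Pn. apply clamp01_le1. lra. Qed.

Lemma Pn_0 n s : 0 <= s -> Pn n 0 s = 0.
Proof. intros. apply Pn_zero. simpl. pose proof (pos_INR n). nra. Qed.

Lemma Pn_top n s : s <= 1 -> Pn n (S n) s = 1.
Proof. intros. apply Pn_one. rewrite S_INR. pose proof (pos_INR n). nra. Qed.

Lemma lip_bound f : lipschitz_on_Icc 0 1 f -> exists B, 0 <= B /\ forall s, 0 <= s <= 1 -> Rabs (f s) <= B.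
Proof.
  intros [L [HL H]]. exists (Rabs (f 0) + L). split. pose proof (Rabs_pos (f 0)); lra.
  intros s Hs. specialize (H s 0 Hs ltac:(lra)).
  replace (s - 0) with s in H by ring. rewrite (Rabs_pos_eq s) in H by lra.
  pose proof (Rabs_triang_inv (f s) (f 0)). assert (L * s <= L) by (destruct Hs; nra). lra.
Qed.

Lemma lip_mult f g : lipschitz_on_Icc 0 1 f -> lipschitz_on_Icc 0 1 g ->
  lipschitz_on_Icc 0 1 (fun s => f s * g s).
Proof.
  intros Hf Hg. destruct (lip_bound f Hf) as [Bf [HBf Hbf]]. destruct (lip_bound g Hg) as [Bg [HBg Hbg]].
  destruct Hf as [Lf [HLf Hf]]. destruct Hg as [Lg [HLg Hg]].
  exists (Bf * Lg + Bg * Lf). split. nra.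
  intros s t Hs Ht.
  replace (f s * g s - f t * g t) with (f s * (g s - g t) + g t * (f s - f t)) by ring.
  eapply Rle_trans. apply Rabs_triang. rewrite !Rabs_mult.
  specialize (Hf s t Hs Ht). specialize (Hg s t Hs Ht). specialize (Hbf s Hs). specialize (Hbg t Ht).
  pose proof (Rabs_pos (f s)). pose proof (Rabs_pos (g t)). pose proof (Rabs_pos (s - t)).
  pose proof (Rabs_pos (g s - g t)). pose proof (Rabs_pos (f s - f t)).
  assert (Rabs (f s) * Rabs (g s - g t) <= Bf * (Lg * Rabs (s - t))).
  { apply Rmult_le_compat; auto. }
  assert (Rabs (g t) * Rabs (f s - f t) <= Bg * (Lf * Rabs (s - t))).
  { apply Rmult_le_compat; auto. }
  nra.
Qed.

Lemma lip_plus f g : lipschitz_on_Icc 0 1 f -> lipschitz_on_Icc 0 1 g ->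
  lipschitz_on_Icc 0 1 (fun s => f s + g s).
Proof.
  intros [Lf [HLf Hf]] [Lg [HLg Hg]]. exists (Lf + Lg). split. lra.
  intros s t Hs Ht. replace (f s + g s - (f t + g t)) with ((f s - f t) + (g s - g t)) by ring.
  eapply Rle_trans. apply Rabs_triang. specialize (Hf s t Hs Ht). specialize (Hg s t Hs Ht). lra.
Qed.

Lemma lip_scal c f : lipschitz_on_Icc 0 1 f -> lipschitz_on_Icc 0 1 (fun s => c * f s).
Proof.
  intros [L [HL H]]. exists (Rabs c * L). split. pose proof (Rabs_pos c); nra.
  intros s t Hs Ht. replace (c * f s - c * f t) with (c * (f s - f t)) by ring.
  rewrite Rabs_mult. rewrite Rmult_assoc. apply Rmult_le_compat_l. apply Rabs_pos. auto.
Qed.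

Lemma lip_minus f g : lipschitz_on_Icc 0 1 f -> lipschitz_on_Icc 0 1 g ->
  lipschitz_on_Icc 0 1 (fun s => f s - g s).
Proof.
  intros Hf Hg. pose proof (lip_plus f (fun s => -1 * g s) Hf (lip_scal (-1) g Hg)) as [L [HL H]].
  exists L. split; auto. intros s t Hs Ht. specialize (H s t Hs Ht).
  replace (f s - g s - (f t - g t)) with (f s + -1 * g s - (f t + -1 * g t)) by ring. auto.
Qed.

Lemma lip_Pn n i : lipschitz_on_Icc 0 1 (Pn n i).
Proof.
  exists (INR n). split. apply pos_INR. intros s t _ _. unfold Pn.
  eapply Rle_trans. apply clamp01_lip.
  replace (INR i - INR n * s - (INR i - INR n * t)) with (- (INR n * (s - t))) by ring.
  rewrite Rabs_Ropp, Rabs_mult, Rabs_pos_eq by apply pos_INR. lra.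
Qed.

Lemma CC_Pn n i : CC (Pn n i).
Proof. apply CC_of_Icc, lip_Icc_cont, lip_Pn. Qed.

Lemma type_facts r x v : well_formed 1 r x -> buyer_type 1 v ->
  CC v /\ CC (r v) /\ CC (x v) /\
  (forall t, 0 <= t <= 1 -> 0 <= r v t <= 1) /\ (forall t, 0 <= t <= 1 -> 0 <= x v t) /\
  (forall t, 0 <= t <= 1 -> 0 <= v t) /\ RInt v 0 1 = 1.
Proof.
  intros Hwf Hv. destruct (Hwf v Hv) as [H1 [H2 [H3 H4]]].
  destruct Hv as [HL [Hp Hi]].
  repeat split; auto; try (apply H3; auto); try apply CC_of_Icc; auto.
  apply lip_Icc_cont; auto.
Qed.

Lemma CC_util r x v v' : well_formed 1 r x -> buyer_type 1 v -> buyer_type 1 v' -> CC (util r x v v').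
Proof.
  intros Hwf Hv Hv'. destruct (type_facts r x v Hwf Hv) as [Cv _].
  destruct (type_facts r x v' Hwf Hv') as [_ [Cr [Cx _]]].
  unfold util. apply CC_minus; [apply CC_mult|]; auto.
Qed.

Lemma const_type : buyer_type 1 (fun _ => 1).
Proof.
  split; [|split].
  - exists 0. split. lra. intros. replace (1 - 1) with 0 by ring. rewrite Rabs_R0. pose proof (Rabs_pos (s - t)). lra.
  - intros; lra.
  - rewrite RInt_const'. lra.
Qed.


Definition Mf (w : R -> R) n i : R := RInt (fun s => w s * Pn n i s) 0 1.
Definition Qf (rw w : R -> R) n i : R := RInt (fun s => rw s * w s * Pn n i s) 0 1.

Lemma exR f : CC f -> ex_RInt f 0 1.
Proof. intros; apply CC_ex_RInt; auto; lra. Qed.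

Lemma diff_M w n j : CC w -> Mf w n (S j) - Mf w n j = RInt (fun s => w s * (Pn n (S j) s - Pn n j s)) 0 1.
Proof.
  intros Cw. unfold Mf. rewrite <- RInt_minus' by (apply exR, CC_mult; auto; apply CC_Pn).
  apply RInt_ext'. intros; ring.
Qed.

Lemma diff_Q rw w n j : CC rw -> CC w -> Qf rw w n (S j) - Qf rw w n j = RInt (fun s => rw s * w s * (Pn n (S j) s - Pn n j s)) 0 1.
Proof.
  intros Cr Cw. unfold Qf. rewrite <- RInt_minus' by (apply exR, CC_mult; [apply CC_mult|apply CC_Pn]; auto).
  apply RInt_ext'. intros; ring.
Qed.

Lemma inc_qm rw w n j : CC rw -> CC w -> (forall t, 0 <= t <= 1 -> 0 <= rw t <= 1) -> (forall t, 0 <= t <= 1 -> 0 <= w t) ->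
  0 <= Qf rw w n (S j) - Qf rw w n j <= Mf w n (S j) - Mf w n j.
Proof.
  intros Cr Cw Hr Hw. rewrite diff_Q, diff_M by auto.
  assert (CP : CC (fun s => Pn n (S j) s - Pn n j s)) by (apply CC_minus; apply CC_Pn).
  split.
  - apply RInt_ge_0. lra. apply exR. apply CC_mult; auto. apply CC_mult; auto.
    intros s Hs. pose proof (Pn_mono n j s). specialize (Hr s ltac:(lra)). specialize (Hw s ltac:(lra)).
    apply Rmult_le_pos; [apply Rmult_le_pos|]; lra.
  - apply RInt_le. lra. apply exR. apply CC_mult; auto. apply CC_mult; auto. apply exR. apply CC_mult; auto.
    intros s Hs. pose proof (Pn_mono n j s). specialize (Hr s ltac:(lra)). specialize (Hw s ltac:(lra)).
    assert (0 <= w s * (Pn n (S j) s - Pn n j s)) by (apply Rmult_le_pos; lra).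
    replace (rw s * w s * (Pn n (S j) s - Pn n j s)) with (rw s * (w s * (Pn n (S j) s - Pn n j s))) by ring.
    nra.
Qed.

Lemma div_facts (nn u s : R) : 0 < nn -> (s < u / nn -> nn * s < u) /\ (u / nn < s -> u < nn * s).
Proof.
  intros H. split; intros H1.
  - apply Rmult_lt_compat_l with (r := nn) in H1; auto. replace (nn * (u / nn)) with u in H1 by (field; lra). lra.
  - apply Rmult_lt_compat_l with (r := nn) in H1; auto. replace (nn * (u / nn)) with u in H1 by (field; lra). lra.
Qed.

Lemma inc_mB w n j B : CC w -> (forall t, 0 <= t <= 1 -> 0 <= w t <= B) -> (1 <= n)%nat -> (j <= n)%nat ->
  Mf w n (S j) - Mf w n j <= 2 * B / INR n.
Proof.
  intros Cw Hw Hn Hj. rewrite diff_M by auto.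
  set (g := fun s => w s * (Pn n (S j) s - Pn n j s)).
  assert (Cg : CC g) by (apply CC_mult; auto; apply CC_minus; apply CC_Pn).
  assert (Hnn : 1 <= INR n) by (apply (le_INR 1); auto).
  assert (HjR : INR j <= INR n) by (apply le_INR; auto).
  set (al := Rmax 0 ((INR j - 1) / INR n)).
  set (be := Rmin 1 ((INR j + 1) / INR n)).
  assert (Hal0 : 0 <= al) by apply Rmax_l.
  assert (Hal1 : (INR j - 1) / INR n <= al) by apply Rmax_r.
  assert (Hbe1 : be <= 1) by apply Rmin_l.
  assert (Hbe2 : be <= (INR j + 1) / INR n) by apply Rmin_r.
  assert (Halbe : al <= be).
  { apply Rmax_lub; apply Rmin_glb; try lra.
    apply Rlt_le, Rdiv_lt_0_compat; pose proof (pos_INR j); lra.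
    apply Rmult_le_reg_r with (INR n); [lra|]. unfold Rdiv. rewrite Rmult_assoc, Rinv_l by lra. lra.
    apply Rmult_le_compat_r. apply Rlt_le, Rinv_0_lt_compat; lra. lra. }
  rewrite <- (RInt_Chasles' g 0 al 1) by (apply CC_ex_RInt; auto; lra).
  rewrite <- (RInt_Chasles' g al be 1) by (apply CC_ex_RInt; auto; lra).
  assert (Z1 : RInt g 0 al = 0).
  { apply RInt_zero_on; auto. intros s Hs. unfold g.
    destruct (div_facts (INR n) (INR j - 1) s ltac:(lra)) as [H1 _].
    assert (s < (INR j - 1) / INR n) by (assert (al = 0 \/ al = (INR j - 1) / INR n) by (unfold al, Rmax; destruct Rle_dec; auto); lra). specialize (H1 H).
    rewrite (Pn_one n (S j)), (Pn_one n j). ring. lra. rewrite S_INR. lra. }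
  assert (Z2 : RInt g be 1 = 0).
  { apply RInt_zero_on; auto. intros s Hs. unfold g.
    destruct (div_facts (INR n) (INR j + 1) s ltac:(lra)) as [_ H1].
    assert ((INR j + 1) / INR n < s) by (assert (be = 1 \/ be = (INR j + 1) / INR n) by (unfold be, Rmin; destruct Rle_dec; auto); lra). specialize (H1 H).
    rewrite (Pn_zero n (S j)), (Pn_zero n j). ring. lra. rewrite S_INR. lra. }
  rewrite Z1, Z2.
  assert (RInt g al be <= RInt (fun _ => B) al be).
  { apply RInt_le; auto. apply CC_ex_RInt; auto; lra. apply ex_RInt_const.
    intros s Hs. unfold g. specialize (Hw s ltac:(lra)). pose proof (Pn_mono n j s).
    pose proof (Pn_in n (S j) s). pose proof (Pn_in n j s). nra. }
  rewrite RInt_const' in H.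
  assert (be - al <= 2 / INR n).
  { replace (2 / INR n) with ((INR j + 1) / INR n - (INR j - 1) / INR n) by (field; lra). lra. }
  assert (0 <= B) by (specialize (Hw 0 ltac:(lra)); lra).
  replace (2 * B / INR n) with (2 / INR n * B) by (field; lra).
  assert ((be - al) * B <= 2 / INR n * B) by (apply Rmult_le_compat_r; lra).
  lra.
Qed.


Lemma M_le1 w n i : CC w -> (forall t, 0 <= t <= 1 -> 0 <= w t) -> RInt w 0 1 = 1 -> Mf w n i <= 1.
Proof.
  intros Cw Hw Hi. rewrite <- Hi. unfold Mf. apply RInt_le. lra.
  apply exR, CC_mult; auto; apply CC_Pn. apply exR; auto.
  intros s Hs. pose proof (Pn_in n i s). specialize (Hw s ltac:(lra)). nra.
Qed.

Lemma attack r x w n j astar :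
  well_formed 1 r x ->
  (forall v, buyer_type 1 v -> forall t, 0 <= t <= 1 -> 0 <= util r x v v t) ->
  (forall v v' tau, buyer_type 1 v -> buyer_type 1 v' -> 0 <= tau <= 1 ->
     (forall t, 0 <= t <= tau -> 0 <= util r x v v' t) ->
     RInt (util r x v v') 0 tau <= RInt (util r x v v) 0 1) ->
  buyer_type 1 w ->
  (forall v, buyer_type 1 v -> RInt (util r x v v) 0 1 <= astar) ->
  (1 <= n)%nat -> (j < n)%nat ->
  (1 - Mf w n (S (S j))) * (Qf (r w) w n (S j) - Qf (r w) w n j) <= astar * (Mf w n (S j) - Mf w n j).
Proof.
  intros Hwf HIR HIC Hw Hsup Hn Hj.
  destruct (type_facts r x w Hwf Hw) as [Cw [Cr [Cx [Hr [Hx [Hwp Hwi]]]]]].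
  destruct (inc_qm (r w) w n j Cr Cw Hr Hwp) as [Hq1 Hq2].
  pose proof (M_le1 w n (S (S j)) Cw Hwp Hwi) as HM2.
  set (m := Mf w n (S j) - Mf w n j) in *.
  set (q := Qf (r w) w n (S j) - Qf (r w) w n j) in *.
  set (M2 := Mf w n (S (S j))) in *.
  destruct (Req_dec m 0) as [Hm0|Hm0].
  { assert (q = 0) by lra. rewrite H, Hm0. lra. }
  assert (Hmp : 0 < m) by lra.
  set (lam := (1 - M2) / m).
  assert (Hlam : 0 <= lam) by (apply Rmult_le_pos; [lra| apply Rlt_le, Rinv_0_lt_compat; lra]).
  set (v := fun s => w s * (Pn n (S (S j)) s + lam * (Pn n (S j) s - Pn n j s))).
  assert (Hnn : 1 <= INR n) by (apply (le_INR 1); auto).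
  assert (HjR : INR (S j) <= INR n) by (apply le_INR; lia).
  set (tau := INR (S j) / INR n).
  assert (Htau : 0 <= tau <= 1).
  { unfold tau. split. apply Rlt_le, Rdiv_lt_0_compat; [rewrite S_INR; pose proof (pos_INR j)|]; lra.
    apply Rmult_le_reg_r with (INR n); [lra|]. unfold Rdiv. rewrite Rmult_assoc, Rinv_l by lra. lra. }
  assert (Htau' : forall s, s <= tau -> INR n * s <= INR (S j)).
  { intros s Hs. unfold tau in Hs. apply Rmult_le_compat_l with (r := INR n) in Hs; [|lra].
    replace (INR n * (INR (S j) / INR n)) with (INR (S j)) in Hs by (field; lra). lra. }
  assert (Htau'' : forall s, tau < s -> INR (S j) < INR n * s).
  { intros s Hs. unfold tau in Hs. apply Rmult_lt_compat_l with (r := INR n) in Hs; [|lra].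
    replace (INR n * (INR (S j) / INR n)) with (INR (S j)) in Hs by (field; lra). lra. }
  assert (Hvtau : forall s, s <= tau -> v s = w s + lam * (w s * (Pn n (S j) s - Pn n j s))).
  { intros s Hs. unfold v. rewrite (Pn_one n (S (S j))). ring. rewrite (S_INR (S j)). specialize (Htau' s Hs). lra. }
  assert (Cd : CC (fun s => Pn n (S j) s - Pn n j s)) by (apply CC_minus; apply CC_Pn).
  assert (Hv : buyer_type 1 v).
  { split; [|split].
    - apply lip_mult. apply Hw. apply lip_plus. apply lip_Pn. apply lip_scal. apply lip_minus; apply lip_Pn.
    - intros t Ht. unfold v. pose proof (Pn_mono n j t). pose proof (Pn_in n (S (S j)) t).
      specialize (Hwp t Ht). apply Rmult_le_pos; auto.
      assert (0 <= lam * (Pn n (S j) t - Pn n j t)) by (apply Rmult_le_pos; lra). lra.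
    - unfold v.
      rewrite (RInt_ext' _ (fun s => w s * Pn n (S (S j)) s + lam * (w s * (Pn n (S j) s - Pn n j s)))).
      2:{ intros. ring. }
      rewrite RInt_plus'. rewrite RInt_scal'. rewrite <- diff_M by auto.
      fold (Mf w n (S (S j))). fold M2. fold m. unfold lam.
      assert (E : M2 + (1 - M2) / m * m = 1) by (field; lra). exact E.
      apply exR, CC_mult; auto.
      apply exR, CC_mult; auto. apply CC_Pn.
      apply exR, CC_mult; auto. apply CC_const. apply CC_mult; auto. }
  assert (HIRv : forall t, 0 <= t <= tau -> 0 <= util r x v w t).
  { intros t Ht. unfold util. rewrite Hvtau by lra.
    specialize (HIR w Hw t ltac:(lra)). unfold util in HIR.
    pose proof (Pn_mono n j t). specialize (Hr t ltac:(lra)). specialize (Hwp t ltac:(lra)).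
    assert (0 <= r w t * (lam * (w t * (Pn n (S j) t - Pn n j t)))).
    { apply Rmult_le_pos. lra. apply Rmult_le_pos. lra. apply Rmult_le_pos; lra. }
    nra. }
  pose proof (HIC v w tau Hv Hw Htau HIRv) as Hdev.
  pose proof (Hsup v Hv) as Hsv.
  set (g := fun s => r w s * w s * (Pn n (S j) s - Pn n j s)).
  assert (Cg : CC g) by (apply CC_mult; auto; apply CC_mult; auto).
  assert (Cu : CC (util r x w w)) by (apply CC_util; auto).
  assert (Hlow : RInt (util r x v w) 0 tau = RInt (util r x w w) 0 tau + lam * RInt g 0 tau).
  { assert (E1 : ex_RInt (util r x w w) 0 tau) by (apply CC_ex_RInt; auto; lra).
    assert (E2 : ex_RInt g 0 tau) by (apply CC_ex_RInt; auto; lra).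
    assert (E3 : ex_RInt (fun s => lam * g s) 0 tau).
    { apply CC_ex_RInt; try lra. apply CC_mult. apply CC_const. exact Cg. }
    rewrite (RInt_ext' _ (fun s => util r x w w s + lam * g s)).
    rewrite (RInt_plus' _ _ _ _ E1 E3), (RInt_scal' _ _ _ _ E2). reflexivity.
    intros s Hs. rewrite Rmin_left in Hs by lra. rewrite Rmax_right in Hs by lra.
    unfold util, g. rewrite Hvtau by lra. ring. }
  assert (Hu0 : 0 <= RInt (util r x w w) 0 tau).
  { apply RInt_ge_0. lra. apply CC_ex_RInt; auto; lra. intros s Hs. apply HIR; auto; lra. }
  assert (Hg1 : RInt g 0 tau = q).
  { unfold q. rewrite diff_Q by auto. fold g.
    rewrite <- (RInt_Chasles' g 0 tau 1) by (apply CC_ex_RInt; auto; lra).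
    rewrite (RInt_zero_on g tau 1). lra. lra.
    intros s Hs. unfold g. specialize (Htau'' s ltac:(lra)).
    rewrite (Pn_zero n (S j)), (Pn_zero n j). ring. rewrite S_INR in Htau''. lra. lra. }
  rewrite Hg1 in Hlow. assert (lam * q <= astar) by lra.
  assert ((1 - M2) = lam * m) by (unfold lam; field; lra).
  rewrite H0. nra.
Qed.


Lemma key_lemma r x : well_formed 1 r x -> truthful 1 r x ->
  forall eps, 0 < eps -> exists w, buyer_type 1 w /\ revenue x w <= exp (-1) + eps.
Proof.
  intros Hwf [HIR HIC] eps Heps.
  assert (HE1 : forall v, buyer_type 1 v -> 0 <= RInt (util r x v v) 0 1 <= 1).
  { intros v Hv. destruct (type_facts r x v Hwf Hv) as [Cv [Cr [Cx [Hr [Hx [Hvp Hvi]]]]]].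
    pose proof (CC_util r x v v Hwf Hv Hv) as Cu. split.
    - apply RInt_ge_0. lra. apply exR; auto. intros s Hs. apply HIR; auto; lra.
    - assert (RInt (util r x v v) 0 1 <= RInt v 0 1).
      { apply RInt_le. lra. apply exR; auto. apply exR; auto.
        intros s Hs. unfold util. specialize (Hr s ltac:(lra)). specialize (Hx s ltac:(lra)).
        specialize (Hvp s ltac:(lra)). nra. }
      lra. }
  set (E := fun u => exists v, buyer_type 1 v /\ u = RInt (util r x v v) 0 1).
  destruct (completeness E) as [astar [Hub Hlub]].
  { exists 1. intros u [v [Hv ->]]. apply HE1; auto. }
  { exists (RInt (util r x (fun _ => 1) (fun _ => 1)) 0 1). exists (fun _ => 1). split; auto. apply const_type. }
  assert (Hsup : forall v, buyer_type 1 v -> RInt (util r x v v) 0 1 <= astar).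
  { intros v Hv. apply Hub. exists v; auto. }
  set (e4 := eps / 4).
  assert (He4 : 0 < e4) by (unfold e4; lra).
  assert (Hex : exists w, buyer_type 1 w /\ astar - e4 < RInt (util r x w w) 0 1).
  { apply NNPP. intro Hn.
    assert (astar <= astar - e4).
    { apply Hlub. intros u [v [Hv ->]]. apply Rnot_lt_le. intro Hlt. apply Hn. exists v; auto. }
    lra. }
  destruct Hex as [w [Hw HUw]].
  exists w. split; auto.
  destruct (type_facts r x w Hwf Hw) as [Cw [Cr [Cx [Hr [Hx [Hwp Hwi]]]]]].
  destruct Hw as [Hwl [_ _]].
  destruct (lip_bound w Hwl) as [B [HB HBw]].
  assert (HBw' : forall t, 0 <= t <= 1 -> 0 <= w t <= B).
  { intros t Ht. split. apply Hwp; auto. specialize (HBw t Ht). rewrite Rabs_pos_eq in HBw; auto. }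
  destruct (INR_unbounded (2 * B / e4)) as [n Hn].
  assert (Hn1 : (1 <= n)%nat).
  { destruct n. simpl in Hn. assert (0 <= 2 * B / e4) by (apply Rmult_le_pos; [lra|apply Rlt_le, Rinv_0_lt_compat; lra]). lra. lia. }
  assert (Hnn : 1 <= INR n) by (apply (le_INR 1); auto).
  set (D := 2 * B / INR n).
  assert (HD : 0 <= D) by (apply Rmult_le_pos; [lra|apply Rlt_le, Rinv_0_lt_compat; lra]).
  assert (HDe : D <= e4).
  { unfold D. apply Rmult_le_reg_r with (INR n). lra. unfold Rdiv. rewrite Rmult_assoc, Rinv_l by lra.
    apply Rmult_lt_compat_l with (r := e4) in Hn; auto.
    replace (e4 * (2 * B / e4)) with (2 * B) in Hn by (field; lra). lra. }
  set (a := astar + e4).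
  assert (HUw0 : 0 <= RInt (util r x w w) 0 1) by (apply HE1; repeat split; auto).
  assert (HUwa : RInt (util r x w w) 0 1 <= astar) by (apply Hsup; repeat split; auto).
  assert (Ha : 0 < a) by (unfold a; lra).
  set (M := Mf w n). set (Q := Qf (r w) w n).
  assert (HM0 : M 0%nat = 0).
  { unfold M, Mf. apply RInt_zero_on. lra. intros s Hs. rewrite Pn_0 by lra. ring. }
  assert (HQ0 : Q 0%nat = 0).
  { unfold Q, Qf. apply RInt_zero_on. lra. intros s Hs. rewrite Pn_0 by lra. ring. }
  assert (HMn : M (S n) = 1).
  { unfold M, Mf. assert (RInt (fun s => w s * Pn n (S n) s) 0 1 = RInt w 0 1).
    { apply RInt_ext'. intros s Hs.
      rewrite Rmin_left in Hs by lra. rewrite Rmax_right in Hs by lra. rewrite Pn_top by lra. ring. }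
    lra. }
  assert (HQn : Q (S n) = RInt (fun s => r w s * w s) 0 1).
  { unfold Q, Qf. apply RInt_ext'. intros s Hs.
    rewrite Rmin_left in Hs by lra. rewrite Rmax_right in Hs by lra. rewrite Pn_top by lra. ring. }
  pose proof (key_real n M Q a D Ha HD HM0 HQ0 HMn) as Hk.
  assert (Hinc : forall i, (1 <= i <= S n)%nat -> 0 <= Q i - Q (pred i) <= M i - M (pred i) /\ M i - M (pred i) <= D).
  { intros i Hi. destruct i as [|j]. lia. simpl pred. unfold M, Q.
    split. apply inc_qm; auto. apply inc_mB; auto. lia. }
  assert (Hcon : forall i, (1 <= i <= n)%nat -> (1 - M (S i)) * (Q i - Q (pred i)) <= a * (M i - M (pred i))).
  { intros i Hi. destruct i as [|j]. lia. simpl pred. unfold M, Q.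
    eapply Rle_trans. apply (attack r x w n j astar); auto. repeat split; auto. lia.
    apply Rmult_le_compat_r. destruct (inc_qm (r w) w n j Cr Cw Hr Hwp). lra. unfold a; lra. }
  specialize (Hk Hinc Hcon).
  assert (HU : RInt (util r x w w) 0 1 = Q (S n) - revenue x w).
  { rewrite HQn. unfold revenue, util. apply RInt_minus'. apply exR, CC_mult; auto. apply exR; auto. }
  rewrite HU in HUw. unfold a in Hk. unfold e4 in *. lra.
Qed.

Theorem theorem8 (r x : mechanism) :
  well_formed 1 r x -> truthful 1 r x ->
  Rbar_le (inf_revenue 1 x) (Finite (exp (-1))).
Proof.
  intros Hwf Ht.
  pose proof (key_lemma r x Hwf Ht) as Hkey.
  unfold inf_revenue.
  destruct (Glb_Rbar_correct (fun y => exists v, buyer_type 1 v /\ y = revenue x v)) as [Hlb _].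
  revert Hlb. generalize (Glb_Rbar (fun y => exists v, buyer_type 1 v /\ y = revenue x v)).
  intros g Hlb. destruct g as [g| |]; simpl; auto.
  - apply Rnot_lt_le; intro Hlt.
    destruct (Hkey ((g - exp (-1)) / 2) ltac:(lra)) as [v [Hv Hr]].
    specialize (Hlb (revenue x v) (ex_intro _ v (conj Hv eq_refl))). simpl in Hlb. lra.
  - destruct (Hkey 1 Rlt_0_1) as [v [Hv _]].
    specialize (Hlb _ (ex_intro _ v (conj Hv eq_refl))). simpl in Hlb. exact Hlb.
Qed.
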